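(* Let $X$ be a doubling discrete metric space, $Y$ a set, and let $A=(a_{y,x})$ be a thin-$\emptyset$ operator of thickness $r$ such that $\||A|\|_{p\to p}\leq1$ for some $1\leq p<\infty$. Then there exists $C$, depending only on the doubling constant of $X$, such that for every non-zero $f\in\ell^p(X)$ and every $L\geq r$, there exists a non-zero function $h\in\ell^p(X)$ supported in a ball of radius $2L$ such that $$\frac{\|Ah\|_p}{\|h\|_p}\leq C\left(\frac{\|Af\|_p}{\|f\|_p}+\frac{r}{L}\right).$$
   Context: $X$ is doubling with doubling constant $D$ if $V(x,2r)\leq D\,V(x,r)$ for all $x\in X$, $r>0$, where $V(x,r)$ is the cardinality of the closed ball of radius $r$. $A$ acts by $Af(y)=\sum_x a_{y,x}f(x)$ and is thin-$\emptyset$ of thickness $r$ if every row $(a_{y,x})_{x\in X}$ is supported in a ball of radius $r$. $|A|=(|a_{y,x}|)$. *)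

(* Defs.v *)
From mathcomp Require Import all_boot all_order all_algebra.
From mathcomp Require Import finmap complex.
From mathcomp Require Import all_classical all_reals all_analysis.
Set Implicit Arguments. Unset Strict Implicit. Unset Printing Implicit Defensive.
Import Order.TTheory GRing.Theory Num.Theory.
Local Open Scope ring_scope.
Local Open Scope classical_set_scope.

Section Defs.
Variable R : realType.

Definition cabs (z : R[i]) : R := ComplexField.Normc.normc z.

Definition is_metric (X : Type) (d : X -> X -> R) : Prop :=
  (forall x y, 0 <= d x y) /\
  (forall x y, d x y = 0 <-> x = y) /\
  (forall x y, d x y = d y x) /\
  (forall x y z, d x z <= d x y + d y z).

Definition cball (X : Type) (d : X -> X -> R) (x : X) (r : R) : set X :=
  [set y | d x y <= r].

(* discrete metric space: every closed ball is finite *)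
Definition locally_finite (X : Type) (d : X -> X -> R) : Prop :=
  forall x r, finite_set (cball d x r).

Definition V (X : choiceType) (d : X -> X -> R) (x : X) (r : R) : nat :=
  (#|` fset_set (cball d x r) |)%N.

Definition doubling (X : choiceType) (d : X -> X -> R) (D : R) : Prop :=
  forall x r, 0 < r -> ((V d x (2 * r))%:R <= D * (V d x r)%:R).

Definition supported_in_ball (X : Type) (d : X -> X -> R) (K : Type) (zero : K)
  (g : X -> K) (r : R) : Prop :=
  exists x0, forall x, g x <> zero -> d x0 x <= r.

(* A = (a y x) is thin-emptyset of thickness r: every row is supported in a
   ball of radius r *)
Definition thin (X Y : Type) (d : X -> X -> R) (a : Y -> X -> R[i]) (r : R) : Prop :=
  forall y, supported_in_ball d 0 (a y) r.

(* (A f)(y) = sum_x a_{y,x} f(x)  (finitely supported sum for thin A) *)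
Definition apply_op (X : choiceType) (Y : Type) (a : Y -> X -> R[i])
  (f : X -> R[i]) : Y -> R[i] :=
  fun y => \sum_(x \in [set: X]) a y x * f x.

Definition abs_op (X Y : Type) (a : Y -> X -> R[i]) : Y -> X -> R[i] :=
  fun y x => ((cabs (a y x))%:C)%C.

Definition lp_pow (T : choiceType) (p : R) (f : T -> R[i]) : \bar R :=
  (\esum_(x in [set: T]) ((cabs (f x)) `^ p)%:E)%E.

Definition in_lp (T : choiceType) (p : R) (f : T -> R[i]) : Prop :=
  (lp_pow p f < +oo)%E.

(* ||f||_p (meaningful when f is in l^p) *)
Definition lp_norm (T : choiceType) (p : R) (f : T -> R[i]) : R :=
  (fine (lp_pow p f)) `^ (p^-1).

Definition op_norm_le1 (X Y : choiceType) (p : R) (b : Y -> X -> R[i]) : Prop :=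
  forall f : X -> R[i], in_lp p f ->
    in_lp p (apply_op b f) /\ lp_norm p (apply_op b f) <= lp_norm p f.

End Defs.

(* Main.v *)
Require Import Defs.
From mathcomp Require Import all_boot all_order all_algebra.
From mathcomp Require Import finmap complex.
From mathcomp Require Import ring lra.
From mathcomp Require Import all_classical all_reals all_analysis.
Import Order.TTheory GRing.Theory Num.Theory.
Local Open Scope ring_scope.

Section Gen.
Variable R : realType.

Lemma cabsE (z : R[i]) : ((cabs z)%:C)%C = `|z|.
Proof. by []. Qed.

Lemma cabs_ge0 (z : R[i]) : 0 <= cabs z.
Proof. by case: z => x y; rewrite /cabs /= sqrtr_ge0. Qed.

Lemma cabsM (x y : R[i]) : cabs (x * y) = cabs x * cabs y.
Proof. exact: ComplexField.Normc.normcM. Qed.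

Lemma cabsD (x y : R[i]) : cabs (x + y) <= cabs x + cabs y.
Proof. by rewrite -lecR rmorphD /= !cabsE ler_normD. Qed.

Lemma cabs_sum (I : Type) (s : seq I) (F : I -> R[i]) :
  cabs (\sum_(i <- s) F i) <= \sum_(i <- s) cabs (F i).
Proof.
rewrite -lecR cabsE rmorph_sum /=.
under [X in _ <= X]eq_bigr do rewrite cabsE.
exact: ler_norm_sum.
Qed.

Lemma cabsR (x : R) : cabs ((x%:C)%C) = `|x|.
Proof. by rewrite /cabs /= [0 ^+ 2]expr2 mulr0 addr0 sqrtr_sqr. Qed.

Lemma cabs_eq0 (z : R[i]) : cabs z = 0 -> z = 0.
Proof. exact: ComplexField.Normc.eq0_normc. Qed.

Lemma cabs0 : cabs (0 : R[i]) = 0.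
Proof. by rewrite -[0 : R[i]]/((0:R)%:C)%C cabsR normr0. Qed.

Local Open Scope ereal_scope.
Local Open Scope classical_set_scope.

Lemma esumZl (T : choiceType) (I : set T) (k : R) (a : T -> \bar R) :
  (0 <= k)%R -> (forall i, 0 <= a i) ->
  \esum_(i in I) (k%:E * a i) = k%:E * \esum_(i in I) a i.
Proof.
move=> k0 a0; rewrite /esum -ereal_supZl //; last first.
  apply/set0P; exists (\sum_(x \in set0) a x); exists set0 => //.
  exact: fsets_set0.
congr ereal_sup; apply/seteqP; split => x /=.
  move=> [A hA <-]; exists (\sum_(x \in A) a x); first by exists A.
  by rewrite ge0_mule_fsumr.
move=> [_ [A hA <-] <-]; exists A => //; by rewrite ge0_mule_fsumr.
Qed.

Lemma esum_swap (T1 T2 : choiceType) (a : T1 -> T2 -> \bar R) :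
  (forall i j, 0 <= a i j) ->
  \esum_(i in [set: T1]) \esum_(j in [set: T2]) a i j =
  \esum_(j in [set: T2]) \esum_(i in [set: T1]) a i j.
Proof.
move=> a0; rewrite !esum_esum //.
rewrite (reindex_esum ([set: T2] `*`` (fun=> [set: T1])) _ (fun x => (x.2, x.1)))//.
split=> //=.
- by move=> [i1 i2] [j1 j2] /= _ _ [] -> ->.
- by move=> [i1 i2] _ /=; exists (i2, i1).
Qed.

Lemma esum_fin (T : choiceType) (B : set T) (a : T -> \bar R) :
  finite_set B -> (forall i, 0 <= a i) -> (forall i, ~ B i -> a i = 0) ->
  \esum_(i in [set: T]) a i = \sum_(i <- fset_set B) a i.
Proof.
move=> fB a0 aB; rewrite (esumID B) //.
rewrite (@esum1 _ _ (setT `&` ~` B)) ?adde0; last by move=> i [_ /aB].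
rewrite setTI esum_fset // ?fsbig_finite //.
Qed.

Lemma esum_ge1 (T : choiceType) (a : T -> \bar R) z0 :
  (forall i, 0 <= a i) -> a z0 <= \esum_(i in [set: T]) a i.
Proof.
move=> a0; apply: esum_ge; exists [set z0]; last by rewrite fsbig_set1.
by split => //; exact: finite_set1.
Qed.

End Gen.
Arguments cabsE {R}. Arguments cabs_ge0 {R}. Arguments cabsM {R}. Arguments cabsD {R}.
Arguments cabs_sum {R I}. Arguments cabsR {R}. Arguments cabs_eq0 {R}. Arguments cabs0 {R}.

Section Main.
Variables (R : realType) (X Y : choiceType) (d : X -> X -> R) (a : Y -> X -> R[i]).
Variables (r p L D : R).
Hypotheses (hd : is_metric d) (hfin : locally_finite d) (hD : doubling d D).
Hypotheses (hthin : thin d a r) (r0 : 0 <= r) (p1 : 1 <= p).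
Hypotheses (hop : op_norm_le1 p (abs_op a)) (L0 : 0 < L) (rL : r <= L).
Variable f : X -> R[i].
Hypotheses (hf : in_lp p f) (f0 : f <> (fun _ => 0)).

Local Open Scope classical_set_scope.

Lemma d_ge0 x y : 0 <= d x y. Proof. exact: hd.1. Qed.
Lemma d_sym x y : d x y = d y x. Proof. exact: hd.2.2.1. Qed.
Lemma d_tri x y z : d x z <= d x y + d y z. Proof. exact: hd.2.2.2. Qed.
Lemma d_refl x : d x x = 0. Proof. by apply/(proj2 (hd.2.1 x x)). Qed.

Definition cen (y : Y) : X := projT1 (cid (hthin y)).
Lemma cenP y x : a y x <> 0 -> d (cen y) x <= r.
Proof. exact: (projT2 (cid (hthin y))). Qed.

Definition Sb (y : Y) : {fset X} := fset_set (cball d (cen y) r).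

Lemma in_ball (c : X) (rho : R) x :
  (x \in fset_set (cball d c rho)) = (d c x <= rho).
Proof.
rewrite in_fset_set ?hfin //; apply/idP/idP => [/set_mem //|h]; exact: mem_set.
Qed.

Lemma apply_opE (b : Y -> X -> R[i]) (u : X -> R[i]) y :
  (forall x, a y x = 0 -> b y x = 0) ->
  apply_op b u y = \sum_(x <- Sb y) b y x * u x.
Proof.
move=> hb; rewrite /apply_op (fsbigTE (Sb y)) // => x.
rewrite /Sb in_ball => hx.
have -> : b y x = 0; last by rewrite mul0r.
apply: hb; apply/eqP; apply: contraNT hx => /eqP h; exact: cenP h.
Qed.

Definition psi (z x : X) : R := Num.max 0 (1 - d z x / L).
Lemma psi_ge0 z x : 0 <= psi z x. Proof. by rewrite /psi le_max lexx. Qed.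
Lemma psi_le1 z x : psi z x <= 1.
Proof.
rewrite /psi ge_max ler01 /=.
have : 0 <= d z x / L by rewrite divr_ge0 ?d_ge0 ?ltW.
lra.
Qed.

Lemma max0_lip (u v : R) : `|Num.max 0 u - Num.max 0 v| <= `|u - v|.
Proof.
case: (lerP 0 u) => hu; case: (lerP 0 v) => hv; rewrite ?subrr ?normr0 ?normr_ge0 //.
- rewrite subr0 ger0_norm //; apply: le_trans (ler_norm _); lra.
- rewrite sub0r normrN ger0_norm // distrC; apply: le_trans (ler_norm _); lra.
Qed.

Lemma psi_lip z x x' : `|psi z x - psi z x'| <= d x x' / L.
Proof.
apply: le_trans (max0_lip _ _) _.
rewrite (_ : (1 - d z x / L) - (1 - d z x' / L) = (d z x' - d z x) / L); last by ring.
rewrite normrM (@ger0_norm _ L^-1) ?invr_ge0 ?(ltW L0) //.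
rewrite ler_pM2r ?invr_gt0 // ler_norml.
have h1 := d_tri z x x'; have h2 := d_tri z x' x; rewrite (d_sym x' x) in h2.
apply/andP; split; lra.
Qed.

Definition hz (z : X) : X -> R[i] := fun x => ((psi z x)%:C)%C * f x.
Lemma cabs_hz z x : cabs (hz z x) = psi z x * cabs (f x).
Proof. by rewrite /hz cabsM cabsR ger0_norm ?psi_ge0. Qed.
Lemma hz_le z x : cabs (hz z x) <= cabs (f x).
Proof.
rewrite cabs_hz; have := psi_le1 z x; have := psi_ge0 z x; have := cabs_ge0 (f x).
nra.
Qed.

Definition G (y : Y) : R := \sum_(x <- Sb y) cabs (a y x) * cabs (f x).
Lemma G_ge0 y : 0 <= G y.
Proof. by apply: sumr_ge0 => x _; rewrite mulr_ge0 ?cabs_ge0. Qed.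

Definition Af := apply_op a f.

Lemma cabs_op_le (u : X -> R[i]) y : (forall x, cabs (u x) <= cabs (f x)) ->
  cabs (apply_op a u y) <= G y.
Proof.
move=> hu; rewrite apply_opE //; apply: le_trans (cabs_sum _ _) _.
by apply: ler_sum => x _; rewrite cabsM ler_wpM2l ?cabs_ge0.
Qed.

Definition g := apply_op (abs_op a) (fun x => ((cabs (f x))%:C)%C).
Lemma gE y : g y = ((G y)%:C)%C.
Proof.
have hb : forall x, a y x = 0 -> abs_op a y x = 0.
  by move=> x hx; rewrite /abs_op hx cabs0.
rewrite /g (@apply_opE (abs_op a) _ y hb).
rewrite rmorph_sum; apply: eq_bigr => x _; by rewrite rmorphM.
Qed.
Lemma cabs_g y : cabs (g y) = G y.
Proof. by rewrite gE cabsR ger0_norm ?G_ge0. Qed.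

Lemma Ah_bound z y :
  cabs (apply_op a (hz z) y) <= psi z (cen y) * cabs (Af y) + r / L * G y.
Proof.
rewrite /Af !apply_opE //; set c := cen y.
have -> : \sum_(x <- Sb y) a y x * hz z x =
   ((psi z c)%:C)%C * (\sum_(x <- Sb y) a y x * f x) +
   \sum_(x <- Sb y) a y x * (((psi z x - psi z c)%:C)%C * f x).
  rewrite mulr_sumr -big_split /=; apply: eq_bigr => x _.
  rewrite /hz rmorphB /=; ring.
apply: le_trans (cabsD _ _) _; rewrite cabsM cabsR ger0_norm ?psi_ge0 //.
apply: lerD => //.
apply: le_trans (cabs_sum _ _) _.
rewrite /G mulr_sumr big_seq [X in _ <= X]big_seq; apply: ler_sum => x hx.
rewrite !cabsM cabsR.
have hl : `|psi z x - psi z c| <= r / L.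
  apply: le_trans (psi_lip z x c) _; rewrite d_sym ler_pM2r ?invr_gt0 //.
  by move: hx; rewrite /Sb in_ball.
rewrite mulrCA; apply: ler_wpM2r => //; by rewrite mulr_ge0 ?cabs_ge0.
Qed.

Lemma Ah_zero z y : 2 * L < d z (cen y) -> apply_op a (hz z) y = 0.
Proof.
move=> h; rewrite apply_opE //; apply: big1_seq => x /andP[_ hx].
rewrite /hz.
have -> : psi z x = 0.
  rewrite /psi max_l //; rewrite subr_le0 ler_pdivlMr // mul1r.
  move: hx; rewrite /Sb in_ball => hx.
  have := d_tri z x (cen y); rewrite (d_sym x (cen y)) => t.
  move: t h hx rL; generalize (d z (cen y)) (d z x) (d (cen y) x) => u v w; lra.
by rewrite mul0r mulr0.
Qed.

Lemma p0 : 0 <= p. Proof. by apply: le_trans p1. Qed.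
Lemma pne0 : p != 0. Proof. by rewrite gt_eqF // (lt_le_trans ltr01 p1). Qed.

Lemma powR_le x y : 0 <= x -> x <= y -> x `^ p <= y `^ p.
Proof.
move=> x0 xy; apply: (ge0_ler_powR p0) => //; rewrite nnegrE //.
exact: le_trans xy.
Qed.

Lemma pow2_le u v : 0 <= u -> 0 <= v -> (u + v) `^ p <= 2 `^ p * (u `^ p + v `^ p).
Proof.
move=> u0 v0; have [h|h] := leP u v.
- apply: (@le_trans _ _ ((2 * v) `^ p)); first by apply: powR_le; rewrite ?addr_ge0 //; lra.
  rewrite powRM //; apply: ler_wpM2l; first exact: powR_ge0.
  by rewrite lerDr powR_ge0.
- apply: (@le_trans _ _ ((2 * u) `^ p)); first by apply: powR_le; rewrite ?addr_ge0 //; lra.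
  rewrite powRM //; apply: ler_wpM2l; first exact: powR_ge0.
  by rewrite lerDl powR_ge0.
Qed.

Definition U (y : Y) : R := cabs (Af y) + r / L * G y.
Lemma U_ge0 y : 0 <= U y.
Proof. by rewrite /U addr_ge0 ?cabs_ge0 // mulr_ge0 ?G_ge0 ?divr_ge0 ?(ltW L0). Qed.

Lemma Ah_pow z y : cabs (apply_op a (hz z) y) `^ p <=
  (if d (cen y) z <= 2 * L then U y `^ p else 0).
Proof.
case: ifPn => hz.
- apply: powR_le; first exact: cabs_ge0.
  apply: le_trans (Ah_bound z y) _; rewrite /U lerD2r.
  have := psi_le1 z (cen y); have := psi_ge0 z (cen y); have := cabs_ge0 (Af y).
  nra.
- by rewrite Ah_zero ?cabs0 ?powR0 ?pne0 // d_sym ltNge.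
Qed.

Local Open Scope ereal_scope.

Lemma lp_ge0 (T : choiceType) (u : T -> R[i]) : 0 <= lp_pow p u.
Proof. by apply: esum_ge0 => x _; rewrite lee_fin powR_ge0. Qed.

Lemma lp_le (T : choiceType) (u v : T -> R[i]) :
  (forall x, (cabs (u x) <= cabs (v x))%R) -> lp_pow p u <= lp_pow p v.
Proof.
move=> h; apply: le_esum => x _; rewrite lee_fin; apply: powR_le => //.
exact: cabs_ge0.
Qed.

Lemma lp_fin (T : choiceType) (u : T -> R[i]) :
  in_lp p u -> lp_pow p u = (fine (lp_pow p u))%:E.
Proof. by move=> hu; rewrite fineK // ge0_fin_numE ?lp_ge0. Qed.

Lemma lp_normK (T : choiceType) (u : T -> R[i]) :
  ((lp_norm p u) `^ p = fine (lp_pow p u))%R.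
Proof.
rewrite /lp_norm -powRrM mulVf ?pne0 // powRr1 //.
by rewrite fine_ge0 ?lp_ge0.
Qed.

Definition absf : X -> R[i] := fun x => ((cabs (f x))%:C)%C.
Lemma lp_absf : lp_pow p absf = lp_pow p f.
Proof. by apply: eq_esum => x _; rewrite /absf cabsR ger0_norm ?cabs_ge0. Qed.

Lemma hop_g : in_lp p g /\ (lp_norm p g <= lp_norm p absf)%R.
Proof. by apply: hop; rewrite /in_lp lp_absf. Qed.

Lemma in_lp_g : in_lp p g. Proof. exact: hop_g.1. Qed.

Lemma Pg_le : (fine (lp_pow p g) <= fine (lp_pow p f))%R.
Proof.
rewrite -lp_absf -!lp_normK; apply: powR_le; first exact: powR_ge0.
exact: hop_g.2.
Qed.

Lemma lp_le_g (u : Y -> R[i]) : (forall y, cabs (u y) <= G y)%R ->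
  lp_pow p u <= lp_pow p g.
Proof. by move=> h; apply: lp_le => y; rewrite cabs_g. Qed.

Lemma in_lp_Af : in_lp p Af.
Proof.
apply: le_lt_trans in_lp_g; apply: lp_le_g => y; exact: cabs_op_le.
Qed.

Lemma in_lp_Ah z : in_lp p (apply_op a (hz z)).
Proof.
apply: le_lt_trans in_lp_g; apply: lp_le_g => y; apply: cabs_op_le; exact: hz_le.
Qed.

Lemma in_lp_hz z : in_lp p (hz z).
Proof. apply: le_lt_trans hf; apply: lp_le; exact: hz_le. Qed.


Local Open Scope ring_scope.

Lemma sum_const_seq (T : Type) (s : seq T) (k : R) : \sum_(i <- s) k = k *+ size s.
Proof. by elim: s => [|x s IH]; rewrite ?big_nil // big_cons IH mulrS. Qed.

Lemma V_mono x rho y sigma : cball d x rho `<=` cball d y sigma ->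
  (V d x rho <= V d y sigma)%N.
Proof. by move=> h; rewrite /V; apply: fsubset_leq_card; rewrite -fset_set_sub ?hfin. Qed.

Lemma V_gt0 x rho : 0 <= rho -> (0 < V d x rho)%N.
Proof.
move=> h; rewrite /V cardfs_gt0; apply/fset0Pn; exists x.
by rewrite in_ball d_refl.
Qed.

Lemma exists_x0 : exists x, f x <> 0.
Proof.
apply: (contra_notP _ f0) => hn; apply/funext => x.
apply: (contra_notP _ hn) => hx; by exists x.
Qed.

Lemma D_ge1 : 1 <= D.
Proof.
have [x0 _] := exists_x0.
have h1 := hD x0 L L0.
have h2 : (V d x0 L <= V d x0 (2 * L))%N.
  by apply: V_mono => y /=; rewrite /cball /= => hy; apply: (le_trans hy); rewrite -[X in X <= _]mul1r ler_pM2r // ler1n.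
have h3 : (0 < V d x0 L)%N by rewrite V_gt0 // ltW.
have : 1 * (V d x0 L)%:R <= D * (V d x0 L)%:R.
  by rewrite mul1r; apply: (le_trans _ h1); rewrite ler_nat.
by rewrite ler_pM2r // ltr0n.
Qed.

Lemma V_double2 x rho : 0 < rho ->
  (V d x (4 * rho))%:R <= D ^+ 2 * (V d x rho)%:R.
Proof.
move=> h; have -> : 4 * rho = 2 * (2 * rho) by ring.
apply: le_trans (hD x (2 * rho) _) _; first by rewrite mulr_gt0.
rewrite expr2 -mulrA ler_wpM2l //; first by apply: le_trans D_ge1.
exact: hD.
Qed.

Definition w (z : X) : R := ((V d z L)%:R)^-1.
Lemma w_gt0 z : 0 < w z.
Proof. by rewrite /w invr_gt0 ltr0n V_gt0 // ltW. Qed.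

Lemma W1 c : \sum_(z <- fset_set (cball d c (2 * L))) w z <= D ^+ 2.
Proof.
set B := fset_set _.
have N0 : (0 < V d c (2 * L))%N by rewrite V_gt0 // mulr_ge0 // ltW.
have D0 : 0 < D ^+ 2 by rewrite exprn_gt0 // (lt_le_trans ltr01 D_ge1).
have hw : forall z, z \in B -> w z <= D ^+ 2 / (V d c (2 * L))%:R.
  move=> z; rewrite /B in_ball => hz.
  have h1 : (V d c (2 * L) <= V d z (4 * L))%N.
    apply: V_mono => y; rewrite /cball /= => hy.
    have := d_tri z c y; rewrite d_sym in hz.
    move: hz hy; generalize (d z c) (d c y) (d z y) => u v t; lra.
  have h2 := @V_double2 z L L0.
  have hV : (0 < V d z L)%N by rewrite V_gt0 // ltW.
  rewrite /w -invf_div lef_pV2 ?posrE ?divr_gt0 ?ltr0n //.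
  rewrite ler_pdivrMr // [_ * D ^+ 2]mulrC; apply: (le_trans _ h2); by rewrite ler_nat.
apply: le_trans (_ : \sum_(z <- B) (D ^+ 2 / (V d c (2 * L))%:R) <= _).
  by rewrite big_seq [X in _ <= X]big_seq; apply: ler_sum.
rewrite sum_const_seq -(mulr_natr (D ^+ 2 / _)) -mulrA.
have -> : (size B)%:R = (V d c (2 * L))%:R :> R by [].
by rewrite mulVf ?mulr1 // pnatr_eq0 -lt0n.
Qed.

Lemma W2 x : (D ^+ 2)^-1 <= \sum_(z <- fset_set (cball d x (L / 2))) w z.
Proof.
set B := fset_set _.
have L2 : 0 < L / 2 by rewrite divr_gt0.
have N0 : (0 < V d x (L / 2))%N by rewrite V_gt0 // ltW.
have D0 : 0 < D ^+ 2 by rewrite exprn_gt0 // (lt_le_trans ltr01 D_ge1).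
have Dp : 0 < D := lt_le_trans ltr01 D_ge1.
have hw : forall z, z \in B -> (D ^+ 2 * (V d x (L / 2))%:R)^-1 <= w z.
  move=> z; rewrite /B in_ball => hz.
  have h1 : (V d z L <= V d x (4 * (L / 2)))%N.
    apply: V_mono => y; rewrite /cball /= => hy.
    have := d_tri x z y.
    move: hz hy L0; generalize (d x z) (d z y) (d x y) => u v t; lra.
  have h2 := @V_double2 x (L / 2) L2.
  rewrite /w lef_pV2 ?posrE ?mulr_gt0 ?ltr0n ?V_gt0 ?(ltW L0) ?(ltW L2) //.
  apply: (le_trans _ h2); by rewrite ler_nat.
have hs : \sum_(z <- B) (D ^+ 2 * (V d x (L / 2))%:R)^-1 <= \sum_(z <- B) w z.
  by rewrite big_seq [X in _ <= X]big_seq; apply: ler_sum.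
apply: (le_trans _ hs).
rewrite sum_const_seq -(mulr_natr (_^-1)).
have -> : (size B)%:R = (V d x (L / 2))%:R :> R by [].
rewrite (invfM (D ^+ 2)) -mulrA mulVf ?mulr1 // pnatr_eq0 -lt0n //.
Qed.


Lemma esum_ball (c : X) (rho k : R) : 0 <= k ->
  (\esum_(z in [set: X]) (((if d c z <= rho then w z else 0) * k)%:E) =
  ((\sum_(z <- fset_set (cball d c rho)) w z) * k)%:E)%E.
Proof.
move=> k0; rewrite (@esum_fin _ _ (cball d c rho)) ?hfin //.
- rewrite sumEFin mulr_suml; congr (_%:E).
  rewrite big_seq [RHS]big_seq; apply: eq_bigr => z; rewrite in_ball => ->.
  by [].
- by move=> z; rewrite lee_fin; case: ifP => _; rewrite ?mul0r // mulr_ge0 // ltW ?w_gt0.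
- move=> z hz; case: ifPn => h; last by rewrite mul0r.
  by exfalso; apply: hz; exact: h.
Qed.

Lemma inv2pow : (2^-1) `^ p = (2 `^ p)^-1 :> R.
Proof.
apply: (@mulIf _ (2 `^ p)); first by rewrite gt_eqF // powR_gt0.
by rewrite -powRM ?invr_ge0 // mulVf // powR1 mulVf // gt_eqF // powR_gt0.
Qed.

Local Open Scope ereal_scope.

Definition PAf := fine (lp_pow p Af).
Definition PF := fine (lp_pow p f).

Lemma upper :
  \esum_(z in [set: X]) ((w z)%:E * lp_pow p (apply_op a (hz z))) <=
  ((D ^+ 2 * 2 `^ p) * (PAf + (r / L) `^ p * PF))%:E.
Proof.
have hw z : (0 <= w z)%R by rewrite ltW ?w_gt0.
have -> : \esum_(z in [set: X]) ((w z)%:E * lp_pow p (apply_op a (hz z))) =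
   \esum_(z in [set: X]) \esum_(y in [set: Y])
     ((w z * cabs (apply_op a (hz z) y) `^ p)%:E).
  apply: eq_esum => z _; rewrite /lp_pow -esumZl //; last by move=> y; rewrite lee_fin powR_ge0.
rewrite esum_swap; last by move=> z y; rewrite lee_fin mulr_ge0 ?powR_ge0.
apply: (@le_trans _ _ (\esum_(y in [set: Y]) \esum_(z in [set: X])
   (((if d (cen y) z <= 2 * L then w z else 0) * U y `^ p)%:E))).
  apply: le_esum => y _; apply: le_esum => z _; rewrite lee_fin.
  have := Ah_pow z y; case: ifP => _ h.
  - by rewrite ler_wpM2l.
  - rewrite mul0r; have -> : (cabs (apply_op a (hz z) y) `^ p = 0)%R.
      by apply/eqP; rewrite eq_le h powR_ge0.
    by rewrite mulr0.
under eq_esum do rewrite esum_ball ?powR_ge0 //.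
apply: (@le_trans _ _ (\esum_(y in [set: Y]) ((D ^+ 2 * 2 `^ p) *
     (cabs (Af y) `^ p + (r / L) `^ p * cabs (g y) `^ p))%:E)).
  apply: le_esum => y _; rewrite lee_fin.
  apply: (@le_trans _ _ (D ^+ 2 * U y `^ p)%R).
    by rewrite ler_wpM2r ?powR_ge0 ?W1.
  rewrite -mulrA ler_wpM2l ?sqr_ge0 // /U cabs_g -powRM ?G_ge0 ?divr_ge0 ?(ltW L0) //.
  apply: pow2_le; first exact: cabs_ge0.
  by rewrite mulr_ge0 ?G_ge0 ?divr_ge0 ?(ltW L0).
have hc : (0 <= D ^+ 2 * 2 `^ p)%R by rewrite mulr_ge0 ?sqr_ge0 ?powR_ge0.
have hrl : (0 <= (r / L) `^ p)%R by rewrite powR_ge0.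
under eq_esum do rewrite (EFinM (D ^+ 2 * 2 `^ p)) EFinD (EFinM ((r / L) `^ p)).
rewrite esumZl //; last by move=> y; rewrite adde_ge0 ?mule_ge0 ?lee_fin ?powR_ge0.
rewrite esumD; [|by move=> y _; rewrite lee_fin powR_ge0|by move=> y _; rewrite mule_ge0 ?lee_fin ?powR_ge0].
rewrite esumZl //; last by move=> y; rewrite lee_fin powR_ge0.
rewrite (EFinM (D ^+ 2 * 2 `^ p)) lee_wpmul2l ?lee_fin //.
rewrite -/(lp_pow p Af) -/(lp_pow p g) EFinD EFinM.
rewrite (lp_fin _ _ in_lp_Af) (lp_fin _ _ in_lp_g) -/PAf leeD2l // lee_wpmul2l ?lee_fin //.
exact: Pg_le.
Qed.


Lemma psi_half z x : (d x z <= L / 2)%R -> ((2 `^ p)^-1 <= psi z x `^ p)%R.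
Proof.
move=> h; rewrite -inv2pow; apply: powR_le; first by rewrite invr_ge0.
rewrite /psi le_max; apply/orP; right.
have : (d z x / L <= 2^-1)%R.
  by rewrite ler_pdivrMr // d_sym mulrC.
lra.
Qed.


Lemma lower :
  ((((2 `^ p)^-1 / D ^+ 2) * PF)%:E) <=
  \esum_(z in [set: X]) ((w z)%:E * lp_pow p (hz z)).
Proof.
have hw z : (0 <= w z)%R by rewrite ltW ?w_gt0.
have D0 : (0 < D ^+ 2)%R by rewrite exprn_gt0 // (lt_le_trans ltr01 D_ge1).
have -> : \esum_(z in [set: X]) ((w z)%:E * lp_pow p (hz z)) =
   \esum_(z in [set: X]) \esum_(x in [set: X])
     ((w z * cabs (hz z x) `^ p)%:E).
  apply: eq_esum => z _; rewrite /lp_pow -esumZl //; last by move=> y; rewrite lee_fin powR_ge0.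
rewrite esum_swap; last by move=> z y; rewrite lee_fin mulr_ge0 ?powR_ge0.
have hk x : (0 <= (2 `^ p)^-1 * cabs (f x) `^ p)%R by rewrite mulr_ge0 ?invr_ge0 ?powR_ge0.
apply: (@le_trans _ _ (\esum_(x in [set: X]) \esum_(z in [set: X])
   (((if d x z <= L / 2 then w z else 0) * ((2 `^ p)^-1 * cabs (f x) `^ p))%:E)));
   last first.
  apply: le_esum => x _; apply: le_esum => z _; rewrite lee_fin.
  case: ifPn => h; last by rewrite mul0r mulr_ge0 ?powR_ge0.
  rewrite ler_wpM2l // cabs_hz powRM ?psi_ge0 ?cabs_ge0 //.
  by rewrite ler_wpM2r ?powR_ge0 ?psi_half.
under eq_esum do rewrite esum_ball //.
apply: (@le_trans _ _ (\esum_(x in [set: X])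
   (((D ^+ 2)^-1 * ((2 `^ p)^-1 * cabs (f x) `^ p))%:E))); last first.
  by apply: le_esum => x _; rewrite lee_fin ler_wpM2r ?W2.
under eq_esum do rewrite mulrA EFinM.
rewrite esumZl; [|by rewrite mulr_ge0 ?invr_ge0 ?powR_ge0 ?ltW|by move=> x; rewrite lee_fin powR_ge0].
rewrite -/(lp_pow p f) (lp_fin _ _ hf) -/PF -EFinM lee_fin.
by rewrite [(_ / _)%R]mulrC.
Qed.


Local Open Scope ring_scope.

Lemma powRV y : 0 < y -> (y^-1) `^ p = (y `^ p)^-1.
Proof.
move=> y0; apply: (@mulIf _ (y `^ p)); first by rewrite gt_eqF // powR_gt0.
by rewrite -powRM ?invr_ge0 ?ltW // mulVf ?gt_eqF // powR1 mulVf // gt_eqF // powR_gt0.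
Qed.

Lemma lp_zero (T : choiceType) : lp_pow p (fun _ : T => 0 : R[i]) = 0%E.
Proof. by apply: esum1 => x _; rewrite cabs0 powR0 ?pne0. Qed.

Lemma lp_pos (T : choiceType) (u : T -> R[i]) : in_lp p u -> u <> (fun _ => 0) ->
  0 < fine (lp_pow p u).
Proof.
move=> hu u0.
have [x hx] : exists x, u x <> 0.
  apply: (contra_notP _ u0) => hn; apply/funext => x.
  apply: (contra_notP _ hn) => hx; by exists x.
have h1 : 0 < cabs (u x) `^ p.
  apply: powR_gt0; rewrite lt_neqAle cabs_ge0 andbT eq_sym.
  by apply/eqP => /cabs_eq0.
have h0 : forall i, (0 <= (cabs (u i) `^ p)%:E)%E by move=> i; rewrite lee_fin powR_ge0.
have := @esum_ge1 R _ (fun x => (cabs (u x) `^ p)%:E) x h0.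
rewrite -/(lp_pow p u) (lp_fin _ _ hu) lee_fin => h2.
exact: lt_le_trans h2.
Qed.

Lemma Cpow : 4 * D ^+ 4 * (2 `^ p * 2 `^ p) <= (16 * D ^+ 4) `^ p.
Proof.
have D1 := D_ge1.
have D4 : 1 <= D ^+ 4 by rewrite exprn_ege1.
rewrite powRM ?(le_trans ler01 D4) //.
have -> : (16 : R) = 4 * 4 by rewrite -natrM.
rewrite powRM // -powRM //.
have -> : (2 : R) * 2 = 4 by rewrite -natrM.
have h4 : 4 <= 4 `^ p by apply: le1r_powR => //; rewrite ler1n.
have hD4 : D ^+ 4 <= (D ^+ 4) `^ p by apply: le1r_powR.
have g0 : 0 <= 4 `^ p :> R by apply: powR_ge0.
have g1 : 0 <= D ^+ 4 by apply: le_trans ler01 D4.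
have -> : 4 * D ^+ 4 * 4 `^ p = (4 * 4 `^ p) * D ^+ 4 by rewrite mulrAC.
apply: ler_pM; [by rewrite mulr_ge0 | exact: g1 | by rewrite ler_wpM2r | exact: hD4].
Qed.


Definition rho := lp_norm p Af / lp_norm p f.
Definition Cc := 16 * D ^+ 4.
Definition K := (Cc * (rho + r / L)) `^ p.

Lemma PF_gt0 : 0 < PF. Proof. exact: lp_pos hf f0. Qed.
Lemma nf_gt0 : 0 < lp_norm p f. Proof. by rewrite /lp_norm powR_gt0 // PF_gt0. Qed.
Lemma rho_ge0 : 0 <= rho. Proof. by rewrite /rho divr_ge0 ?powR_ge0. Qed.
Lemma s_ge0 : 0 <= r / L. Proof. by rewrite divr_ge0 // ltW. Qed.
Lemma Cc_ge0 : 0 <= Cc.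
Proof. by rewrite /Cc mulr_ge0 // exprn_ge0 // (le_trans ler01 D_ge1). Qed.

Lemma PAf_eq : PAf = rho `^ p * PF.
Proof.
rewrite /rho powRM ?powR_ge0 ?invr_ge0 ?(ltW nf_gt0) // powRV ?nf_gt0 // !lp_normK -/PAf -/PF.
by rewrite -mulrA mulVf ?mulr1 // gt_eqF // PF_gt0.
Qed.

Lemma key_ineq : 2 * (D ^+ 2 * 2 `^ p * (PAf + (r / L) `^ p * PF)) <=
  K * ((2 `^ p)^-1 / D ^+ 2) * PF.
Proof.
have s0 := s_ge0; have rh0 := rho_ge0; have PF0 := ltW PF_gt0.
set s := r / L in s0 *.
set q := (rho + s) `^ p.
have q0 : 0 <= q by apply: powR_ge0.
have hA : PAf + s `^ p * PF <= 2 * q * PF.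
  rewrite PAf_eq -mulrDl ler_wpM2r //.
  have -> : 2 * q = q + q by ring.
  apply: lerD; apply: powR_le => //; by rewrite ?lerDl ?lerDr.
have hD1 := D_ge1.
have u0 : 0 < 2 `^ p :> R by apply: powR_gt0.
have Dd0 : 0 < D ^+ 2 by rewrite exprn_gt0 // (lt_le_trans ltr01 hD1).
apply: (@le_trans _ _ (4 * D ^+ 2 * 2 `^ p * q * PF)).
  have -> : 2 * (D ^+ 2 * 2 `^ p * (PAf + s `^ p * PF)) =
    (2 * D ^+ 2 * 2 `^ p) * (PAf + s `^ p * PF) by ring.
  have -> : 4 * D ^+ 2 * 2 `^ p * q * PF = (2 * D ^+ 2 * 2 `^ p) * (2 * q * PF) by ring.
  by apply: ler_wpM2l => //; rewrite !mulr_ge0 ?sqr_ge0 ?powR_ge0 ?ler0n ?(le_trans ler01 hD1).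
have Kq : K = Cc `^ p * q by rewrite /K powRM ?Cc_ge0 // addr_ge0.
have -> : 4 * D ^+ 2 * 2 `^ p * q * PF =
    (4 * D ^+ 4 * (2 `^ p * 2 `^ p)) * q * ((2 `^ p)^-1 / D ^+ 2) * PF.
  field; apply/andP; split; rewrite gt_eqF //.
  by rewrite (lt_le_trans ltr01 hD1).
rewrite Kq; apply: ler_wpM2r => //; apply: ler_wpM2r.
  by rewrite divr_ge0 // ?invr_ge0 ltW.
by apply: ler_wpM2r => //; exact: Cpow.
Qed.


Lemma psi_self z : psi z z = 1.
Proof. by rewrite /psi d_refl mul0r subr0 max_r // ler01. Qed.

Lemma hz_ne0 : exists z, hz z <> (fun _ => 0).
Proof.
have [x0 hx0] := exists_x0; exists x0 => /(congr1 (fun g => g x0)).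
by rewrite /hz psi_self mul1r.
Qed.

Lemma key : exists z, hz z <> (fun _ => 0) /\
  fine (lp_pow p (apply_op a (hz z))) <= K * fine (lp_pow p (hz z)).
Proof.
case: (pselect (exists z, hz z <> (fun _ => 0) /\
  fine (lp_pow p (apply_op a (hz z))) <= K * fine (lp_pow p (hz z)))) => // hn.
exfalso.
have K0 : 0 <= K by apply: powR_ge0.
have H z : hz z <> (fun _ => 0) ->
    K * fine (lp_pow p (hz z)) < fine (lp_pow p (apply_op a (hz z))).
  move=> hz0; rewrite ltNge; apply/negP => hle; apply: hn; by exists z.
have H' z : K * fine (lp_pow p (hz z)) <= fine (lp_pow p (apply_op a (hz z))).
  case: (pselect (hz z = fun _ => 0)) => e; last exact: ltW (H z e).
  rewrite e lp_zero /= mulr0; apply: fine_ge0; exact: lp_ge0.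
have hw z : 0 <= w z by rewrite ltW ?w_gt0.
set T1 := (\esum_(z in [set: X]) ((w z)%:E * lp_pow p (apply_op a (hz z))))%E.
set T2 := (\esum_(z in [set: X]) ((w z)%:E * lp_pow p (hz z)))%E.
have e1 : T1 = (\esum_(z in [set: X]) (w z * fine (lp_pow p (apply_op a (hz z))))%:E)%E.
  by apply: eq_esum => z _; rewrite EFinM -(lp_fin _ _ (in_lp_Ah z)).
have e2 : T2 = (\esum_(z in [set: X]) (w z * fine (lp_pow p (hz z)))%:E)%E.
  by apply: eq_esum => z _; rewrite EFinM -(lp_fin _ _ (in_lp_hz z)).
have hT : (K%:E * T2 <= T1)%E.
  rewrite e1 e2 -esumZl //; last by move=> z; rewrite lee_fin mulr_ge0 ?fine_ge0 ?lp_ge0.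
  apply: le_esum => z _; rewrite -EFinM lee_fin mulrCA ler_wpM2l //.
set M := D ^+ 2 * 2 `^ p * (PAf + (r / L) `^ p * PF).
set c0 := (2 `^ p)^-1 / D ^+ 2.
have hup : (T1 <= M%:E)%E by exact: upper.
have hlo : ((c0 * PF)%:E <= T2)%E by exact: lower.
have hKM : K * (c0 * PF) <= M.
  rewrite -lee_fin EFinM; apply: le_trans hup; apply: le_trans hT.
  by rewrite lee_wpmul2l // lee_fin.
have hM := key_ineq; rewrite -/M -/c0 -mulrA in hM.
have M0 : M <= 0.
  have h22 : 2 * M <= M := le_trans hM hKM.
  clearbody M; lra.
have [z0 hz0] := hz_ne0.
have h1 := H z0 hz0.
have h2 : ((w z0 * fine (lp_pow p (apply_op a (hz z0))))%:E <= T1)%E.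
  rewrite e1; apply: (@esum_ge1 R _ (fun z => (w z * fine (lp_pow p (apply_op a (hz z))))%:E)).
  by move=> z; rewrite lee_fin mulr_ge0 ?fine_ge0 ?lp_ge0.
have h3 : w z0 * fine (lp_pow p (apply_op a (hz z0))) <= 0.
  by rewrite -lee_fin; apply: le_trans h2 (le_trans hup _); rewrite lee_fin.
have h4 : 0 <= K * fine (lp_pow p (hz z0)) by rewrite mulr_ge0 ?fine_ge0 ?lp_ge0.
have h5 := w_gt0 z0.
move: h1 h3 h4 h5; generalize (w z0) (fine (lp_pow p (apply_op a (hz z0))))
  (K * fine (lp_pow p (hz z0))) => u v t ha hb hc he.
nra.
Qed.


Lemma main_sec : exists h : X -> R[i],
  [/\ in_lp p h, h <> (fun _ => 0), supported_in_ball d 0 h (2 * L) &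
      lp_norm p (apply_op a h) / lp_norm p h
        <= (16 * D ^+ 4) * (lp_norm p (apply_op a f) / lp_norm p f + r / L)].
Proof.
have [z [hz0 hle]] := key.
exists (hz z); split.
- exact: in_lp_hz.
- exact: hz0.
- exists z => x hx.
  have : psi z x != 0.
    by apply: contra_notN hx => /eqP e; rewrite /hz e mul0r.
  rewrite /psi; case: (lerP 0 (1 - d z x / L)) => h; last by rewrite eqxx.
  move=> hu; have : d z x / L < 1.
    by rewrite -subr_gt0 lt_neqAle h andbT eq_sym hu.
  rewrite ltr_pdivrMr // mul1r => h2.
  move: h2 L0; generalize (d z x) => t ha hb; lra.
- have ph0 : 0 < fine (lp_pow p (hz z)) by apply: lp_pos => //; exact: in_lp_hz.
  have pi0 : 0 <= p^-1 by rewrite invr_ge0 p0.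
  rewrite ler_pdivrMr ?powR_gt0 //.
  rewrite /lp_norm -/Af -/rho -/Cc.
  have hC : 0 <= Cc * (rho + r / L) by rewrite mulr_ge0 ?Cc_ge0 ?addr_ge0 ?rho_ge0 ?s_ge0.
  apply: (@le_trans _ _ ((K * fine (lp_pow p (hz z))) `^ p^-1)).
    apply: (ge0_ler_powR pi0) => //; rewrite nnegrE ?fine_ge0 ?lp_ge0 //.
    by rewrite mulr_ge0 ?powR_ge0 ?fine_ge0 ?lp_ge0.
  rewrite powRM ?powR_ge0 ?fine_ge0 ?lp_ge0 // /K -powRrM mulfV ?pne0 // powRr1 //.
Qed.

End Main.

Theorem theorem4p1 (R : realType) (D : R) :
  exists C : R,
  forall (X Y : choiceType) (d : X -> X -> R) (a : Y -> X -> R[i]) (r p : R),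
    is_metric d -> locally_finite d -> doubling d D ->
    thin d a r -> 0 <= r ->
    1 <= p -> op_norm_le1 p (abs_op a) ->
    forall (f : X -> R[i]) (L : R),
      in_lp p f -> f <> (fun _ => 0) -> 0 < L -> r <= L ->
      exists h : X -> R[i],
        [/\ in_lp p h, h <> (fun _ => 0), supported_in_ball d 0 h (2 * L) &
          lp_norm p (apply_op a h) / lp_norm p h
            <= C * (lp_norm p (apply_op a f) / lp_norm p f + r / L)].
Proof.
exists (16 * (Num.max 1 D) ^+ 4).
move=> X Y d a r p hd hfin hD hthin r0 p1 hop f L hf f0 L0 rL.
have D1 := @D_ge1 R X d L D hd hfin hD L0 f f0.
rewrite max_r //.
exact: (@main_sec R X Y d a r p L D hd hfin hD hthin r0 p1 hop L0 rL f hf f0).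
Qed.
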